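(* Let $k$ be a field, $\mathsf{E}$ a locally finite $k$-linear category, and $N$ a locally finite right $\mathsf{E}$-module. Then $N$ is isomorphic to $\Upsilon_{\mathsf{E}^{op}}(\mathcal{N})$ for some (locally finite) right $\mathcal{C}_\mathsf{E}$-comodule $\mathcal{N}$ if and only if, for every object $y\in\mathsf{E}$, the set of all objects $x\in\mathsf{E}$ for which the action map $\operatorname{Hom}_\mathsf{E}(x,y)\otimes_kN(y)\to N(x)$ is nonzero is finite.
   Context: A small $k$-linear category $\mathsf{E}$ has $k$-vector spaces $\operatorname{Hom}_\mathsf{E}(x,y)$, $k$-bilinear associative composition and identities with $\mathrm{id}_x\ne0$. A right $\mathsf{E}$-module is a $k$-linear functor $N:\mathsf{E}^{op}\to k\text{-Vect}$ (spaces $N(x)$ and action maps $\operatorname{Hom}_\mathsf{E}(x,y)\otimes_kN(y)\to N(x)$); it is locally finite if all $N(x)$ are finite-dimensional. Write $x\preceq y$ if there are $n\ge1$ and objects $x=z_0,\dots,z_n=y$ with $\operatorname{Hom}_\mathsf{E}(z_{i-1},z_i)\neq0$ for all $i$. $\mathsf{E}$ is locally finite if all $\operatorname{Hom}_\mathsf{E}(x,y)$ are finite-dimensional and every $\{z:x\preceq z\preceq y\}$ is finite. $\mathcal{C}_\mathsf{E}=\bigoplus_{x,y}\mathcal{C}^{x,y}$, $\mathcal{C}^{x,y}=\operatorname{Hom}_\mathsf{E}(x,y)^*$; counit zero on $\mathcal{C}^{x,y}$ for $x\ne y$, evaluation at $\mathrm{id}_x$ on $\mathcal{C}^{x,x}$;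 comultiplication $\mathcal{C}^{x,y}\to\bigoplus_z\mathcal{C}^{x,z}\otimes\mathcal{C}^{z,y}$ dual to composition $g\otimes h\mapsto hg$. For a right $\mathcal{C}_\mathsf{E}$-comodule $(\mathcal{N},\nu:\mathcal{N}\to\mathcal{N}\otimes\mathcal{C}_\mathsf{E})$ and $\varphi\in\mathcal{C}_\mathsf{E}^*$ set $\varphi\cdot n=(\mathrm{id}\otimes\varphi)\nu(n)$. With $e_x$ evaluation at $\mathrm{id}_x$ on $\mathcal{C}^{x,x}$ (zero elsewhere) and, for $f\in\operatorname{Hom}_\mathsf{E}(x,y)$, $\mathrm{ev}_f$ evaluation at $f$ on $\mathcal{C}^{x,y}$ (zero elsewhere), the functor $\Upsilon_{\mathsf{E}^{op}}$ sends $\mathcal{N}$ to the right $\mathsf{E}$-module with $\Upsilon_{\mathsf{E}^{op}}(\mathcal{N})(x)=e_x\cdot\mathcal{N}$ (with $\mathcal{N}=\bigoplus_xe_x\cdot\mathcal{N}$) and $f\in\operatorname{Hom}_\mathsf{E}(x,y)$ acting $e_y\cdot\mathcal{N}\to e_x\cdot\mathcal{N}$ by $n\mapsto\mathrm{ev}_f\cdot n$. $\mathcal{N}$ is locally finite if $\Upsilon_{\mathsf{E}^{op}}(\mathcal{N})$ is. *)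

(* Defs.v *)
From mathcomp Require Import all_boot all_algebra.
From Stdlib Require List.
Set Implicit Arguments.
Unset Strict Implicit.
Unset Printing Implicit Defensive.
Import GRing.Theory.
Local Open Scope ring_scope.

Definition findim (k : fieldType) (V : lmodType k) : Prop :=
  exists (n : nat) (b : 'I_n -> V),
    forall v : V, exists c : 'I_n -> k, v = \sum_(i < n) c i *: b i.

Record kcat (k : fieldType) := KCat {
  obj : Type;
  hom : obj -> obj -> lmodType k;
  comp : forall x y z, hom y z -> hom x y -> hom x z;
  idm : forall x, hom x x;
  comp_linl : forall x y z (a : k) (h1 h2 : hom y z) (g : hom x y),
      comp (a *: h1 + h2) g = a *: comp h1 g + comp h2 g;
  comp_linr : forall x y z (a : k) (h : hom y z) (g1 g2 : hom x y),
      comp h (a *: g1 + g2) = a *: comp h g1 + comp h g2;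
  compA : forall w x y z (h : hom y z) (g : hom x y) (f : hom w x),
      comp h (comp g f) = comp (comp h g) f;
  comp_idl : forall x y (f : hom x y), comp (idm y) f = f;
  comp_idr : forall x y (f : hom x y), comp f (idm x) = f;
  idm_neq0 : forall x, idm x != 0
}.


Arguments hom {k} k0 _ _ : rename.
Arguments idm {k} k0 x : rename.
Arguments comp {k k0 x y z} _ _ : rename.

Section Defs.
Variables (k : fieldType) (E : kcat k).

Definition homnz (x y : obj E) : Prop := exists f : hom E x y, f != 0.

Inductive prec : obj E -> obj E -> Prop :=
| prec1 x y : homnz x y -> prec x y
| precS x z y : homnz x z -> prec z y -> prec x y.

Definition lf_cat : Prop :=
  (forall x y, findim (hom E x y)) /\
  (forall x y, exists zs : seq (obj E),
      forall z, prec x z -> prec z y -> List.In z zs).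

Record rmod := RMod {
  mob : obj E -> lmodType k;
  mact : forall x y, hom E x y -> mob y -> mob x;
  mact_linl : forall x y (a : k) (f1 f2 : hom E x y) (n : mob y),
      mact (a *: f1 + f2) n = a *: mact f1 n + mact f2 n;
  mact_linr : forall x y (f : hom E x y) (a : k) (n1 n2 : mob y),
      mact f (a *: n1 + n2) = a *: mact f n1 + mact f n2;
  mact_id : forall x (n : mob x), mact (idm E x) n = n;
  mact_comp : forall x y z (h : hom E y z) (g : hom E x y) (n : mob z),
      mact (comp h g) n = mact g (mact h n)
}.

Definition lf_mod (N : rmod) : Prop := forall x, findim (mob N x).

(* C_E = (+)_{x,y} Hom_E(x,y)^*.  Since every
   Hom_E(x,y) is finite-dimensional (E locally finite), we model
     NN (x) C_E = (+)_{x,y} NN (x) Hom_E(x,y)^*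
                ~= (+)_{x,y} Hom_k(Hom_E(x,y), NN)
   (n (x) gamma  |->  (f |-> gamma(f) n)).  So the coaction nu : NN -> NN (x) C_E
   is a family  nu n x y : Hom_E(x,y) -> NN, k-linear in f and in n, finitely
   supported in (x,y) for each n.  Under this identification
   (id (x) ev_f) nu(n) = nu n x y f  and  (id (x) e_x) nu(n) = nu n x x id_x,
   and the counit / coassociativity axioms read as below. *)
Record comod := CoMod {
  cV : lmodType k;
  nu : cV -> forall x y, hom E x y -> cV;
  nu_linl : forall (n : cV) x y (a : k) (f1 f2 : hom E x y),
      nu n (a *: f1 + f2) = a *: nu n f1 + nu n f2;
  nu_linr : forall (a : k) (n1 n2 : cV) x y (f : hom E x y),
      nu (a *: n1 + n2) f = a *: nu n1 f + nu n2 f;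
  (* nu(n) lies in the direct sum: only finitely many components nonzero *)
  nu_fin : forall n : cV, exists s : seq (obj E * obj E),
      forall x y (f : hom E x y), nu n f != 0 -> List.In (x, y) s;
  (* counit: (id (x) eps) nu(n) = sum_x nu n x x id_x = n *)
  nu_counit : forall n : cV, exists xs : seq (obj E),
      List.NoDup xs /\
      (forall x, ~ List.In x xs -> nu n (idm E x) = 0) /\
      n = \sum_(x <- xs) nu n (idm E x);
  (* coassociativity (nu (x) id) nu = (id (x) Delta) nu, component of
     C^{x,z} (x) C^{z',y}: equal to nu n (h o g) if z = z', and 0 otherwise *)
  nu_coass : forall x z y (g : hom E x z) (h : hom E z y) (n : cV),
      nu (nu n h) g = nu n (comp h g);
  nu_coass0 : forall x z z' y (g : hom E x z) (h : hom E z' y) (n : cV),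
      z <> z' -> nu (nu n h) g = 0
}.

(* phi . n = (id (x) phi) nu(n) for phi = e_x and phi = ev_f *)
Definition dot_e (C : comod) (x : obj E) (n : cV C) : cV C := nu n (idm E x).
Definition dot_ev (C : comod) x y (f : hom E x y) (n : cV C) : cV C := nu n f.

(* Upsilon(NN)(x) = e_x . NN, as a subset of NN *)
Definition Upsilon_ob (C : comod) (x : obj E) (v : cV C) : Prop :=
  exists w : cV C, v = dot_e x w.

Definition iso_Upsilon (N : rmod) (C : comod) : Prop :=
  exists phi : forall x, mob N x -> cV C,
    (forall x (a : k) (n1 n2 : mob N x),
        phi x (a *: n1 + n2) = a *: phi x n1 + phi x n2) /\
    (forall x, injective (phi x)) /\
    (forall x (v : cV C), (exists n, phi x n = v) <-> Upsilon_ob x v) /\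
    (forall x y (f : hom E x y) (n : mob N y),
        phi x (mact f n) = dot_ev f (phi y n)).

Definition finite_action_support (N : rmod) : Prop :=
  forall y : obj E, exists xs : seq (obj E),
    forall x : obj E,
      (exists (f : hom E x y) (n : mob N y), mact f n != 0) -> List.In x xs.

End Defs.

(* Main.v *)
Require Import Defs.
From mathcomp Require Import all_boot all_algebra.
From HB Require Import structures.
From mathcomp Require boolp.
From Stdlib Require Import ClassicalEpsilon FunctionalExtensionality ProofIrrelevance.
From Stdlib Require Eqdep.
Import Defs.
Set Implicit Arguments.
Unset Strict Implicit.
Unset Printing Implicit Defensive.
Import GRing.Theory.
Local Open Scope ring_scope.

Section Constr.
Variables (k : fieldType) (E : kcat k) (N : rmod E).

Definition odec (a b : obj E) : {a = b} + {a <> b} := excluded_middle_informative (a = b).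

Record fs := FS { fsf : forall x, mob N x;
  fsP : exists xs : seq (obj E), forall x, fsf x != 0 -> List.In x xs }.

Lemma fs_ext (a b : fs) : (forall x, fsf a x = fsf b x) -> a = b.
Proof.
case: a => fa Pa; case: b => fb Pb /= H.
have E1 := functional_extensionality_dep _ _ H. subst fb.
by rewrite (proof_irrelevance _ Pa Pb).
Qed.

HB.instance Definition _ := boolp.gen_eqMixin fs.
HB.instance Definition _ := boolp.gen_choiceMixin fs.

Lemma fs0_P : exists xs : seq (obj E), forall x, (0 : mob N x) != 0 -> List.In x xs.
Proof. by exists [::] => x; rewrite eqxx. Qed.
Definition fs0 : fs := FS fs0_P.

Lemma fsadd_P (a b : fs) : exists xs : seq (obj E), forall x, fsf a x + fsf b x != 0 -> List.In x xs.
Proof.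
case: (fsP a) => xa Ha; case: (fsP b) => xb Hb; exists (xa ++ xb) => x H.
apply List.in_or_app.
case: (eqVneq (fsf a x) 0) => ea; last by left; apply: Ha.
right; apply: Hb; by move: H; rewrite ea add0r.
Qed.
Definition fsadd (a b : fs) : fs := FS (fsadd_P a b).

Lemma fsopp_P (a : fs) : exists xs : seq (obj E), forall x, - fsf a x != 0 -> List.In x xs.
Proof. case: (fsP a) => xa Ha; exists xa => x; rewrite oppr_eq0; exact: Ha. Qed.
Definition fsopp (a : fs) : fs := FS (fsopp_P a).

Lemma fsscale_P (c : k) (a : fs) : exists xs : seq (obj E), forall x, c *: fsf a x != 0 -> List.In x xs.
Proof.
case: (fsP a) => xa Ha; exists xa => x H; apply: Ha.
apply/eqP => e; move: H; by rewrite e scaler0 eqxx.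
Qed.
Definition fsscale (c : k) (a : fs) : fs := FS (fsscale_P c a).

Lemma fs_addrA : associative fsadd.
Proof. by move=> a b c; apply: fs_ext => x /=; rewrite addrA. Qed.
Lemma fs_addrC : commutative fsadd.
Proof. by move=> a b; apply: fs_ext => x /=; rewrite addrC. Qed.
Lemma fs_add0r : left_id fs0 fsadd.
Proof. by move=> a; apply: fs_ext => x /=; rewrite add0r. Qed.
Lemma fs_addNr : left_inverse fs0 fsopp fsadd.
Proof. by move=> a; apply: fs_ext => x /=; rewrite addNr. Qed.

HB.instance Definition _ := GRing.isZmodule.Build fs fs_addrA fs_addrC fs_add0r fs_addNr.

Lemma fs_scalerA a b v : fsscale a (fsscale b v) = fsscale (a * b) v.
Proof. by apply: fs_ext => x /=; rewrite scalerA. Qed.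
Lemma fs_scale1r : left_id 1 fsscale.
Proof. by move=> v; apply: fs_ext => x /=; rewrite scale1r. Qed.
Lemma fs_scalerDr : right_distributive fsscale +%R.
Proof. by move=> a u v; apply: fs_ext => x /=; rewrite scalerDr. Qed.
Lemma fs_scalerDl : forall v, {morph fsscale^~ v: a b / a + b}.
Proof. by move=> v a b; apply: fs_ext => x /=; rewrite scalerDl. Qed.

HB.instance Definition _ := GRing.Zmodule_isLmodule.Build k fs fs_scalerA fs_scale1r fs_scalerDr fs_scalerDl.

Lemma fsf_sum (I : Type) (s : seq I) (F : I -> fs) z :
  fsf (\sum_(i <- s) F i) z = \sum_(i <- s) fsf (F i) z.
Proof.
elim: s => [|a s IH]; first by rewrite !big_nil.
by rewrite !big_cons -IH.
Qed.

Definition sgl (x : obj E) (v : mob N x) (z : obj E) : mob N z :=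
  match odec z x with left e => eq_rect_r (fun w => mob N w) v e | right _ => 0 end.

Lemma sgl_eq x (v : mob N x) : sgl v x = v.
Proof. rewrite /sgl; case: odec => [e|//]. by rewrite (Eqdep.EqdepTheory.UIP_refl _ _ e). Qed.

Lemma sgl_neq x (v : mob N x) z : z <> x -> sgl v z = 0.
Proof. by rewrite /sgl; case: odec. Qed.

Lemma sgl_lin x (a : k) (u v : mob N x) z : sgl (a *: u + v) z = a *: sgl u z + sgl v z.
Proof.
case: (odec z x) => [e|ne]; first by subst z; rewrite !sgl_eq.
by rewrite !sgl_neq // scaler0 addr0.
Qed.

Lemma sgl0 x z : sgl (0 : mob N x) z = 0.
Proof. case: (odec z x) => [e|ne]; first by subst z; rewrite !sgl_eq. by rewrite sgl_neq. Qed.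

Lemma sgl_P x (v : mob N x) : exists xs : seq (obj E), forall z, sgl v z != 0 -> List.In z xs.
Proof.
exists [:: x] => z H; case: (odec z x) => [e|ne]; first by left.
by move: H; rewrite sgl_neq // eqxx.
Qed.
Definition single x (v : mob N x) : fs := FS (sgl_P v).

Lemma single_lin x (a : k) (u v : mob N x) : single (a *: u + v) = a *: single u + single v.
Proof. by apply: fs_ext => z /=; rewrite sgl_lin. Qed.

Lemma single0 x : single (0 : mob N x) = 0.
Proof. by apply: fs_ext => z /=; rewrite sgl0. Qed.

Lemma mact0 x y (f : hom E x y) : mact f (0 : mob N y) = 0.
Proof.
have h := @mact_linr _ _ N _ _ f 1 0 0; rewrite !scale1r !addr0 in h.
by apply: (@addrI _ (mact f 0)); rewrite addr0 -h.
Qed.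

Lemma mactD x y (f : hom E x y) (u v : mob N y) : mact f (u + v) = mact f u + mact f v.
Proof. by have := mact_linr f 1 u v; rewrite !scale1r. Qed.

Lemma mactf0 x y (n : mob N y) : mact (0 : hom E x y) n = 0.
Proof.
have h := @mact_linl _ _ N x y 1 0 0 n; rewrite !scale1r !addr0 in h.
by apply: (@addrI _ (mact 0 n)); rewrite addr0 -h.
Qed.

Definition cnu (n : fs) x y (f : hom E x y) : fs := single (mact f (fsf n y)).

Lemma cnu_linl (n : fs) x y (a : k) (f1 f2 : hom E x y) :
  cnu n (a *: f1 + f2) = a *: cnu n f1 + cnu n f2.
Proof. by rewrite /cnu mact_linl single_lin. Qed.

Lemma cnu_linr (a : k) (n1 n2 : fs) x y (f : hom E x y) :
  cnu (a *: n1 + n2) f = a *: cnu n1 f + cnu n2 f.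
Proof. by rewrite /cnu /= mact_linr single_lin. Qed.

Lemma cnu_coass x z y (g : hom E x z) (h : hom E z y) (n : fs) :
  cnu (cnu n h) g = cnu n (comp h g).
Proof. by rewrite /cnu /= sgl_eq mact_comp. Qed.

Lemma cnu_coass0 x z z' y (g : hom E x z) (h : hom E z' y) (n : fs) :
  z <> z' -> cnu (cnu n h) g = 0.
Proof. by move=> ne; rewrite /cnu /= sgl_neq // mact0 single0. Qed.

Lemma mactZ x y (f : hom E x y) (a : k) (u : mob N y) : mact f (a *: u) = a *: mact f u.
Proof. by have := mact_linr f a u 0; rewrite !addr0 mact0 addr0. Qed.

Lemma sum_single (xs : seq (obj E)) (n : fs) : List.NoDup xs -> forall z,
  (List.In z xs -> fsf (\sum_(x <- xs) single (fsf n x)) z = fsf n z) /\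
  (~ List.In z xs -> fsf (\sum_(x <- xs) single (fsf n x)) z = 0).
Proof.
elim: xs => [|a xs IH] ND z.
  by split => //; rewrite big_nil.
have ND' := ND; apply List.NoDup_cons_iff in ND' as [na ndxs].
have [IH1 IH2] := IH ndxs z.
rewrite big_cons; split.
  case=> [e|iz].
    subst z; rewrite /= sgl_eq IH2 ?addr0 //.
  have ne : z <> a by move=> e; subst z.
  by rewrite /= sgl_neq // add0r -IH1.
move=> niz; have ne : z <> a by move=> e; apply: niz; left.
rewrite /= sgl_neq // add0r IH2 // => h; apply: niz; by right.
Qed.

Lemma cnu_counit (n : fs) : exists xs : seq (obj E),
      List.NoDup xs /\
      (forall x, ~ List.In x xs -> cnu n (idm E x) = 0) /\
      n = \sum_(x <- xs) cnu n (idm E x).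
Proof.
case: (fsP n) => xs0 H0.
have nz : forall x, ~ List.In x (List.nodup odec xs0) -> fsf n x = 0.
  move=> x nx; apply/eqP; apply/negP => /negP h; apply: nx.
  by apply/List.nodup_In; apply: H0.
exists (List.nodup odec xs0); split; first exact: List.NoDup_nodup.
split.
  by move=> x nx; rewrite /cnu mact_id nz // single0.
apply: fs_ext => z.
have := sum_single n (List.NoDup_nodup odec xs0) z.
case=> h1 h2.
rewrite /cnu; under eq_bigr do rewrite mact_id.
have [iz|niz] := classic (List.In z (List.nodup odec xs0)).
  by rewrite h1.
by rewrite h2 // nz.
Qed.

Lemma sgl_mact0 x y (f : hom E x y) (n : mob N y) : mact f n != 0 -> n != 0.
Proof. by apply: contraNneq => ->; rewrite mact0 eqxx. Qed.

Lemma cnu_fin_aux (n : fs) : finite_action_support N -> forall ys : seq (obj E),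
  exists s : seq (obj E * obj E), forall x y (f : hom E x y),
    List.In y ys -> mact f (fsf n y) != 0 -> List.In (x, y) s.
Proof.
move=> Hfin; elim=> [|y ys [s Hs]]; first by exists [::].
case: (Hfin y) => xs Hxs.
exists (List.map (fun x => (x, y)) xs ++ s) => x y' f.
case=> [e|iy] h; apply List.in_or_app.
  subst y'; left; apply: (List.in_map (fun x => (x, y))).
  by apply: Hxs; exists f, (fsf n y).
by right; exact: (Hs x y' f iy h).
Qed.

Lemma cnu_fin (n : fs) : finite_action_support N ->
  exists s : seq (obj E * obj E),
      forall x y (f : hom E x y), cnu n f != 0 -> List.In (x, y) s.
Proof.
move=> Hfin; case: (fsP n) => ys Hys.
case: (cnu_fin_aux n Hfin ys) => s Hs; exists s => x y f h.
have h' : mact f (fsf n y) != 0.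
  by apply: contraNneq h => e; rewrite /cnu e single0.
exact: (Hs x y f (Hys y (sgl_mact0 h')) h').
Qed.

End Constr.

Lemma in_In (T : eqType) (x : T) (s : seq T) : x \in s -> List.In x s.
Proof.
elim: s => [//|a s IH]; rewrite inE => /orP [/eqP -> | h]; [by left | by right; apply: IH].
Qed.

Theorem proposition5p2 (k : fieldType) (E : kcat k) (N : rmod E) :
  lf_cat E -> lf_mod N ->
  ((exists C : comod E, iso_Upsilon N C) <-> finite_action_support N).
Proof.
move=> _ HlfN; split.
  case=> C [phi [Hlin [Hinj [Him Hnat]]]] y.
  have phi0 : forall x, phi x 0 = 0.
    move=> x; have h := Hlin x 1 0 0; rewrite !scale1r !addr0 in h.
    by apply: (@addrI _ (phi x 0)); rewrite addr0 -h.
  have key : forall v : cV C, Upsilon_ob y v -> exists s : seq (obj E),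
      forall x (f : hom E x y), nu v f != 0 -> List.In x s.
    move=> v [w ->]; case: (nu_fin w) => s Hs; exists (List.map fst s) => x f.
    rewrite /dot_e nu_coass comp_idl => h.
    exact: (List.in_map fst s (x, y) (Hs _ _ _ h)).
  have fam : forall l : seq (mob N y), exists xs : seq (obj E), forall v,
      List.In v l -> forall x (f : hom E x y), nu (phi y v) f != 0 -> List.In x xs.
    elim=> [|v l [xs Hxs]]; first by exists [::].
    have [s Hs] := key (phi y v) ((Him y (phi y v)).1 (ex_intro _ v erefl)).
    exists (s ++ xs) => v' [e|iv] x f h; apply List.in_or_app.
      by subst v'; left; apply: Hs h.
    by right; apply: Hxs h.
  case: (HlfN y) => m [b Hb].
  have [xs Hxs] := fam (List.map b (enum 'I_m)).
  exists xs => x [f [n Hn]].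
  case: (Hb n) => c ec; subst n.
  case: (boolP [exists i, mact f (b i) != 0]) => [/existsP [i hi] | hno].
    apply: (Hxs (b i) _ x f); first by apply: List.in_map; apply: in_In; rewrite mem_enum.
    have := Hnat x y f (b i); rewrite /dot_ev => <-.
    apply: contraNneq hi => e; apply/eqP; apply: (Hinj x (mact f (b i)) 0); by rewrite e phi0.
  exfalso; move/negP: Hn; apply.
  rewrite negb_exists in hno; move/forallP: hno => hno.
  apply/eqP; apply: (big_ind (fun v => mact f v = 0)).
  - exact: mact0.
  - by move=> u v hu hv; rewrite mactD hu hv addr0.
  - by move=> i _; rewrite mactZ; move/negPn/eqP: (hno i) => ->; rewrite scaler0.
move=> Hfin.
pose C := CoMod (@cnu_linl _ _ N) (@cnu_linr _ _ N) (fun n => cnu_fin n Hfin)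
  (@cnu_counit _ _ N) (@cnu_coass _ _ N) (@cnu_coass0 _ _ N).
exists C; exists (@single _ _ N); split.
  by move=> x a n1 n2; rewrite single_lin.
split.
  move=> x v1 v2 e.
  have := f_equal (fun w => fsf w x) e; by rewrite /= !sgl_eq.
split.
  move=> x v; split.
    case=> n <-; exists (single n); rewrite /dot_e /= /cnu /=.
    by rewrite sgl_eq mact_id.
  case=> w ->; exists (fsf w x); by rewrite /dot_e /= /cnu mact_id.
move=> x y f n; by rewrite /dot_ev /= /cnu /= sgl_eq.
Qed.
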